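(* Consider the setting described in the context. For every $j\in\{1,\dots,n\}$ and every $t\in[0,T]$, the modal error $e_j(t)=d^h_j(t)u^h_j-d_j(t)u_j$ satisfies \[ \begin{aligned} \|e_j(t)\|_{L^2(\Omega)}\le\ & \|u_0\|_{L^2}\Big(2\|u^h_j-u_j\|_{L^2}+|\cos(\omega^h_jt)-\cos(\omega_jt)|\Big)\\ &+\frac{\|v_0\|_{L^2}}{\omega_j}\Big(\frac{\omega^h_j-\omega_j}{\omega_j}+2\|u^h_j-u_j\|_{L^2}+|\sin(\omega^h_jt)-\sin(\omega_jt)|\Big)\\ &+\frac{1}{\omega_j}\int_0^t\|f(\tau)\|_{L^2}\,d\tau\Big(\frac{\omega^h_j-\omega_j}{\omega_j}+2\|u^h_j-u_j\|_{L^2}+\max_{\tau\in[0,t]}|\sin(\omega^h_j\tau)-\sin(\omega_j\tau)|\Big). \end{aligned} \]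
   Context: Let $\Omega\subset\mathbb{R}^d$ be open, connected, with Lipschitz boundary, $T>0$, and $V\subseteq H^1(\Omega)$ a closed subspace (e.g. functions vanishing on a Dirichlet boundary part) such that the eigenvalue problem $(\nabla u,\nabla v)_{L^2(\Omega)^d}=\lambda(u,v)_{L^2(\Omega)}$ for all $v\in V$ has eigenpairs $(\lambda_i,u_i)_{i\ge1}$ with $0<\lambda_1\le\lambda_2\le\cdots$ and $\{u_i\}$ an $L^2(\Omega)$-orthonormal basis. Let $V^h\subset V$ be a finite-dimensional subspace of dimension $n$ (conforming Galerkin space with consistent mass, i.e. the exact $L^2$ inner product), with discrete eigenpairs $(\lambda^h_i,u^h_i)_{i=1}^n$ of the same problem restricted to $V^h$, ordered $0<\lambda^h_1\le\dots\le\lambda^h_n$ and $L^2$-orthonormal. Set $\omega_i=\sqrt{\lambda_i}$, $\omega^h_i=\sqrt{\lambda^h_i}$. Data: $u_0,v_0\in L^2(\Omega)$, $f\in C^0([0,T];L^2(\Omega))$. Define $u_{i,0}=(u_0,u_i)_{L^2}$, $v_{i,0}=(v_0,u_i)_{L^2}$, $f_i(t)=(f(t),u_i)_{L^2}$ and analogously $u^h_{i,0},v^h_{i,0},f^h_i$ with $u^h_i$ in place of $u_i$, and the modal coefficients \[ d_i(t)=u_{i,0}\cos(\omega_it)+\frac{v_{i,0}}{\omega_i}\sin(\omega_it)+\frac1{\omega_i}\int_0^t\sin(\omega_i(t-\tau))f_i(\tau)\,d\tau, \] \[ d^h_i(t)=u^h_{i,0}\cos(\omega^h_it)+\frac{v^h_{i,0}}{\omega^h_i}\sin(\omega^h_it)+\frac1{\omega^h_i}\int_0^t\sin(\omega^h_i(t-\tau))f^h_i(\tau)\,d\tau,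 \] so that the exact and Galerkin solutions of the wave equation $\partial_{tt}u-\Delta u=f$ are $u=\sum_{i\ge1}d_iu_i$ and $u^h=\sum_{i=1}^nd^h_iu^h_i$. *)

(* Defs.v *)
From Stdlib Require Import Reals Lra.
From Coquelicot Require Import Coquelicot.
Set Implicit Arguments.
Open Scope R_scope.

(* ---------- Abstract real inner-product space (models L^2(Omega)) ---------- *)
Definition inner_product {H : ModuleSpace R_Ring} (ip : H -> H -> R) : Prop :=
  (forall x y, ip x y = ip y x) /\
  (forall (c : R) x y z, ip (plus (scal c x) y) z = c * ip x z + ip y z) /\
  (forall x, x <> zero -> 0 < ip x x).

Definition l2norm {H : ModuleSpace R_Ring} (ip : H -> H -> R) (x : H) : R :=
  sqrt (ip x x).

Definition subspace {H : ModuleSpace R_Ring} (V : H -> Prop) : Prop :=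
  V zero /\ (forall (c : R) x y, V x -> V y -> V (plus (scal c x) y)).

Definition subspace_of_dim {H : ModuleSpace R_Ring} (Vh : H -> Prop) (n : nat) : Prop :=
  subspace Vh /\ (1 <= n)%nat /\
  exists b : nat -> H,
    (forall k, (k < n)%nat -> Vh (b k)) /\
    (forall v, Vh v -> exists c : nat -> R,
        v = sum_n_m (fun k => scal (c k) (b k)) 0 (pred n)) /\
    (forall c : nat -> R,
        sum_n_m (fun k => scal (c k) (b k)) 0 (pred n) = zero ->
        forall k, (k < n)%nat -> c k = 0).

(* the bilinear form a(u,v) = (grad u, grad v) on V: symmetric, bilinear, nonnegative *)
Definition energy_form {H : ModuleSpace R_Ring} (V : H -> Prop) (a : H -> H -> R) : Prop :=
  (forall x y, V x -> V y -> a x y = a y x) /\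
  (forall (c : R) x y z, V x -> V y -> V z ->
      a (plus (scal c x) y) z = c * a x z + a y z) /\
  (forall x, V x -> 0 <= a x x).

Definition exact_eigenpairs {H : ModuleSpace R_Ring} (ip : H -> H -> R)
  (V : H -> Prop) (a : H -> H -> R) (lam : nat -> R) (u : nat -> H) : Prop :=
  (forall i, (1 <= i)%nat -> V (u i) /\
      forall v, V v -> a (u i) v = lam i * ip (u i) v) /\
  0 < lam 1%nat /\
  (forall i, (1 <= i)%nat -> lam i <= lam (S i)) /\
  (forall i k, (1 <= i)%nat -> (1 <= k)%nat ->
      ip (u i) (u k) = if Nat.eqb i k then 1 else 0) /\
  (forall x, is_lim_seq
      (fun N => l2norm ip (minus x (sum_n_m (fun i => scal (ip x (u i)) (u i)) 1 N))) 0).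

Definition discrete_eigenpairs {H : ModuleSpace R_Ring} (ip : H -> H -> R)
  (Vh : H -> Prop) (n : nat) (a : H -> H -> R) (lamh : nat -> R) (uh : nat -> H) : Prop :=
  (forall i, (1 <= i <= n)%nat -> Vh (uh i) /\
      forall v, Vh v -> a (uh i) v = lamh i * ip (uh i) v) /\
  0 < lamh 1%nat /\
  (forall i, (1 <= i)%nat -> (i < n)%nat -> lamh i <= lamh (S i)) /\
  (forall i k, (1 <= i <= n)%nat -> (1 <= k <= n)%nat ->
      ip (uh i) (uh k) = if Nat.eqb i k then 1 else 0).

Definition continuous_on_0T {H : ModuleSpace R_Ring} (ip : H -> H -> R)
  (T : R) (f : R -> H) : Prop :=
  forall t0, 0 <= t0 <= T -> forall eps, 0 < eps ->
    exists delta, 0 < delta /\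
      forall t, 0 <= t <= T -> Rabs (t - t0) < delta ->
        l2norm ip (minus (f t) (f t0)) < eps.

Definition dcoef {H : ModuleSpace R_Ring} (ip : H -> H -> R) (lam : R) (w : H)
  (u0 v0 : H) (f : R -> H) (t : R) : R :=
  let om := sqrt lam in
  ip u0 w * cos (om * t) + ip v0 w / om * sin (om * t)
  + / om * RInt (fun tau => sin (om * (t - tau)) * ip (f tau) w) 0 t.

(* max_{tau in [0,t]} g(tau), as the supremum (attained for continuous g) *)
Definition max_on_0t (g : R -> R) (t : R) : R :=
  real (Lub_Rbar (fun y => exists tau, 0 <= tau <= t /\ y = g tau)).

(* Main.v *)
Require Import Defs.
From Stdlib Require Import Reals.
From Coquelicot Require Import Coquelicot.
From Stdlib Require Import Lra Lia Classical.
Open Scope R_scope.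

Ltac rg := match goal with |- ?a = ?b => change (a = b :> R); ring end.


Lemma scal_1 {H : ModuleSpace R_Ring} (x : H) : scal 1 x = x.
Proof. exact (scal_one x). Qed.

Lemma ip_zero_l {H : ModuleSpace R_Ring} {ip : H -> H -> R} :
  inner_product ip -> forall z, ip zero z = 0.
Proof.
  intros [Hs [Hl Hp]] z.
  pose proof (Hl 1 zero zero z) as E.
  rewrite scal_1, plus_zero_r in E. lra.
Qed.

Lemma ip_scal_l {H : ModuleSpace R_Ring} {ip : H -> H -> R} :
  inner_product ip -> forall c x z, ip (scal c x) z = c * ip x z.
Proof.
  intros Hip c x z. pose proof Hip as [Hs [Hl Hp]].
  pose proof (Hl c x zero z) as E.
  rewrite plus_zero_r in E. rewrite E, (ip_zero_l Hip). ring.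
Qed.

Lemma ip_plus_l {H : ModuleSpace R_Ring} {ip : H -> H -> R} :
  inner_product ip -> forall x y z, ip (plus x y) z = ip x z + ip y z.
Proof.
  intros Hip x y z. pose proof Hip as [Hs [Hl Hp]].
  pose proof (Hl 1 x y z) as E. rewrite scal_1 in E. rewrite E. ring.
Qed.

Lemma ip_opp_l {H : ModuleSpace R_Ring} {ip : H -> H -> R} :
  inner_product ip -> forall x z, ip (opp x) z = - ip x z.
Proof.
  intros Hip x z. rewrite <- (scal_opp_one x), (ip_scal_l Hip).
  change (opp one) with (-1). ring.
Qed.

Lemma ip_minus_l {H : ModuleSpace R_Ring} {ip : H -> H -> R} :
  inner_product ip -> forall x y z, ip (minus x y) z = ip x z - ip y z.
Proof.
  intros Hip x y z. unfold minus. rewrite (ip_plus_l Hip), (ip_opp_l Hip). ring.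
Qed.

Lemma ip_sym {H : ModuleSpace R_Ring} {ip : H -> H -> R} :
  inner_product ip -> forall x y, ip x y = ip y x.
Proof. intros [Hs _]; exact Hs. Qed.

Lemma ip_minus_r {H : ModuleSpace R_Ring} {ip : H -> H -> R} :
  inner_product ip -> forall x y z, ip z (minus x y) = ip z x - ip z y.
Proof.
  intros Hip x y z. rewrite !(ip_sym Hip z), (ip_minus_l Hip). ring.
Qed.

Lemma ip_nonneg {H : ModuleSpace R_Ring} {ip : H -> H -> R} :
  inner_product ip -> forall x, 0 <= ip x x.
Proof.
  intros Hip x. pose proof Hip as [Hs [Hl Hp]].
  destruct (classic (x = zero)) as [->|Hx].
  - rewrite (ip_zero_l Hip). lra.
  - left. apply Hp. exact Hx.
Qed.

Lemma ip_zero_iff {H : ModuleSpace R_Ring} {ip : H -> H -> R} :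
  inner_product ip -> forall x, ip x x = 0 -> x = zero.
Proof.
  intros Hip x E. pose proof Hip as [Hs [Hl Hp]].
  destruct (classic (x = zero)) as [?|Hx]; auto.
  specialize (Hp x Hx). lra.
Qed.

Lemma cauchy_schwarz2 {H : ModuleSpace R_Ring} {ip : H -> H -> R} :
  inner_product ip -> forall x y, (ip x y)^2 <= ip x x * ip y y.
Proof.
  intros Hip x y.
  destruct (Req_dec (ip y y) 0) as [E|E].
  - apply (ip_zero_iff Hip) in E. subst y.
    rewrite !(ip_sym Hip x), !(ip_zero_l Hip). nra.
  - pose proof (ip_nonneg Hip y) as Py.
    set (c := ip x y / ip y y).
    pose proof (ip_nonneg Hip (minus x (scal c y))) as P.
    rewrite (ip_minus_l Hip), !(ip_minus_r Hip), !(ip_scal_l Hip) in P.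
    rewrite (ip_sym Hip x (scal c y)), (ip_sym Hip y (scal c y)), !(ip_scal_l Hip), (ip_sym Hip y x) in P.
    assert (0 < ip y y) by lra.
    assert (Q : 0 <= ip x x - ip x y ^ 2 / ip y y).
    { replace (ip x x - ip x y ^ 2 / ip y y) with
       (ip x x - c * ip x y - (c * ip x y - c * (c * ip y y))) by (unfold c; field; lra).
      lra. }
    apply Rmult_le_reg_r with (/ ip y y). apply Rinv_0_lt_compat; lra.
    replace (ip x x * ip y y * / ip y y) with (ip x x) by (field; lra).
    unfold Rdiv in Q. lra.
Qed.

Lemma l2norm_nonneg {H : ModuleSpace R_Ring} (ip : H -> H -> R) x :
  0 <= l2norm ip x.
Proof. apply sqrt_pos. Qed.

Lemma l2norm_sq {H : ModuleSpace R_Ring} {ip : H -> H -> R} :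
  inner_product ip -> forall x, l2norm ip x * l2norm ip x = ip x x.
Proof. intros Hip x. unfold l2norm. apply sqrt_sqrt, (ip_nonneg Hip). Qed.

Lemma cauchy_schwarz {H : ModuleSpace R_Ring} {ip : H -> H -> R} :
  inner_product ip -> forall x y, Rabs (ip x y) <= l2norm ip x * l2norm ip y.
Proof.
  intros Hip x y.
  pose proof (cauchy_schwarz2 Hip x y) as C.
  rewrite <- (l2norm_sq Hip x), <- (l2norm_sq Hip y) in C.
  pose proof (l2norm_nonneg ip x). pose proof (l2norm_nonneg ip y).
  assert (0 <= l2norm ip x * l2norm ip y) by nra.
  rewrite <- (Rabs_pos_eq (l2norm ip x * l2norm ip y)) by auto.
  apply Rsqr_le_abs_0. unfold Rsqr. nra.
Qed.


Lemma ip_plus_r {H : ModuleSpace R_Ring} {ip : H -> H -> R} :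
  inner_product ip -> forall x y z, ip z (plus x y) = ip z x + ip z y.
Proof. intros Hip x y z. rewrite !(ip_sym Hip z), (ip_plus_l Hip). ring. Qed.

Lemma ip_scal_r {H : ModuleSpace R_Ring} {ip : H -> H -> R} :
  inner_product ip -> forall c x z, ip z (scal c x) = c * ip z x.
Proof. intros Hip c x z. rewrite !(ip_sym Hip z), (ip_scal_l Hip). ring. Qed.

Lemma l2norm_scal {H : ModuleSpace R_Ring} {ip : H -> H -> R} :
  inner_product ip -> forall c x, l2norm ip (scal c x) = Rabs c * l2norm ip x.
Proof.
  intros Hip c x. unfold l2norm.
  rewrite (ip_scal_l Hip), (ip_scal_r Hip).
  replace (c * (c * ip x x)) with (Rsqr c * ip x x) by (unfold Rsqr; ring).
  rewrite sqrt_mult by (try apply Rle_0_sqr; apply (ip_nonneg Hip)).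
  rewrite sqrt_Rsqr_abs. reflexivity.
Qed.

Lemma l2norm_triangle {H : ModuleSpace R_Ring} {ip : H -> H -> R} :
  inner_product ip -> forall x y, l2norm ip (plus x y) <= l2norm ip x + l2norm ip y.
Proof.
  intros Hip x y.
  pose proof (l2norm_nonneg ip x). pose proof (l2norm_nonneg ip y).
  rewrite <- (sqrt_square (l2norm ip x + l2norm ip y)) by lra.
  unfold l2norm at 1. apply sqrt_le_1_alt.
  rewrite (ip_plus_l Hip), !(ip_plus_r Hip).
  pose proof (cauchy_schwarz Hip x y). pose proof (Rle_abs (ip x y)).
  rewrite (ip_sym Hip y x).
  pose proof (l2norm_sq Hip x). pose proof (l2norm_sq Hip y). nra.
Qed.

Lemma l2norm_opp {H : ModuleSpace R_Ring} {ip : H -> H -> R} :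
  inner_product ip -> forall x, l2norm ip (opp x) = l2norm ip x.
Proof.
  intros Hip x. rewrite <- scal_opp_one, (l2norm_scal Hip).
  change (opp one) with (Ropp 1). rewrite Rabs_Ropp, Rabs_R1. ring.
Qed.

Lemma l2norm_minus_sym {H : ModuleSpace R_Ring} {ip : H -> H -> R} :
  inner_product ip -> forall x y, l2norm ip (minus x y) = l2norm ip (minus y x).
Proof.
  intros Hip x y. rewrite <- (l2norm_opp Hip (minus y x)).
  rewrite opp_minus. reflexivity.
Qed.

Lemma l2norm_rev {H : ModuleSpace R_Ring} {ip : H -> H -> R} :
  inner_product ip -> forall x y,
  Rabs (l2norm ip x - l2norm ip y) <= l2norm ip (minus x y).
Proof.
  intros Hip x y.
  assert (A : forall a b, l2norm ip a <= l2norm ip (minus a b) + l2norm ip b).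
  { intros a b. replace a with (plus (minus a b) b) at 1.
    apply (l2norm_triangle Hip).
    unfold minus. rewrite <- plus_assoc, plus_opp_l, plus_zero_r. reflexivity. }
  pose proof (A x y). pose proof (A y x). rewrite (l2norm_minus_sym Hip y x) in *.
  apply Rabs_le. lra.
Qed.

Lemma l2norm_ip1 {H : ModuleSpace R_Ring} (ip : H -> H -> R) x :
  ip x x = 1 -> l2norm ip x = 1.
Proof. intros E. unfold l2norm. rewrite E. apply sqrt_1. Qed.

Lemma lin_sum {H : ModuleSpace R_Ring} (P : H -> Prop) (L : H -> R) (g : nat -> H) :
  P zero -> (forall x y, P x -> P y -> P (plus x y)) ->
  L zero = 0 -> (forall x y, P x -> P y -> L (plus x y) = L x + L y) ->
  forall p q, (forall k, (p <= k <= q)%nat -> P (g k)) ->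
  P (sum_n_m g p q) /\ L (sum_n_m g p q) = sum_n_m (fun k => L (g k)) p q.
Proof.
  intros P0 Pp L0 Lp p q. induction q as [|q IH]; intros Hg.
  - destruct p as [|p].
    + rewrite !sum_n_n. split; [apply Hg; lia|reflexivity].
    + rewrite !sum_n_m_zero by lia. split; auto.
  - destruct (Compare_dec.le_lt_dec p (S q)) as [Hpq|Hpq].
    + destruct (Compare_dec.le_lt_dec p q) as [Hpq'|Hpq'].
      * rewrite !sum_n_Sm by lia.
        destruct IH as [IH1 IH2]. { intros k Hk. apply Hg. lia. }
        split. { apply Pp; [exact IH1|apply Hg; lia]. }
        rewrite (Lp _ _ IH1 (Hg (S q) ltac:(lia))), IH2. reflexivity.
      * assert (p = S q) by lia. subst p. rewrite !sum_n_n.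
        split; [apply Hg; lia|reflexivity].
    + rewrite !sum_n_m_zero by lia. split; auto.
Qed.



Lemma sumR_Sm (f : nat -> R) p q : (p <= S q)%nat ->
  sum_n_m f p (S q) = sum_n_m f p q + f (S q) :> R.
Proof. intros. rewrite sum_n_Sm by lia. reflexivity. Qed.

Lemma sumR_zero (f : nat -> R) p q :
  (forall k, (p <= k <= q)%nat -> f k = 0) -> sum_n_m f p q = 0 :> R.
Proof.
  intros Hf. rewrite (sum_n_m_ext_loc f (fun _ => zero)).
  apply (@sum_n_m_const_zero R_AbelianMonoid). intros k Hk. rewrite Hf by lia. reflexivity.
Qed.

Lemma sumR_scal (c : R) (f : nat -> R) p q :
  sum_n_m (fun k => c * f k) p q = c * sum_n_m f p q :> R.
Proof. apply (sum_n_m_mult_l c f). Qed.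

Lemma sumR_plus (f g : nat -> R) p q :
  sum_n_m (fun k => f k + g k) p q = sum_n_m f p q + sum_n_m g p q :> R.
Proof. apply (sum_n_m_plus f g). Qed.

Lemma sumR_minus (f g : nat -> R) p q :
  sum_n_m (fun k => f k - g k) p q = sum_n_m f p q - sum_n_m g p q :> R.
Proof.
  replace (sum_n_m (fun k => f k - g k) p q) with
    (sum_n_m (fun k => f k + (-1) * g k) p q).
  rewrite sumR_plus, sumR_scal. ring.
  apply sum_n_m_ext_loc. intros. rg.
Qed.

Lemma sumR_single (f : nat -> R) p q k : (p <= k <= q)%nat ->
  (forall l, (p <= l <= q)%nat -> l <> k -> f l = 0) -> sum_n_m f p q = f k :> R.
Proof.
  revert k. induction q as [|q IH]; intros k Hk Hf.
  - assert (p = 0 /\ k = 0)%nat as [-> ->] by lia. apply sum_n_n.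
  - rewrite sumR_Sm by lia.
    destruct (Nat.eq_dec k (S q)) as [->|Hne].
    + destruct (Compare_dec.le_lt_dec p q) as [Hl0|Hl0].
      * rewrite sumR_zero. ring. intros l Hl. apply Hf; lia.
      * rewrite sum_n_m_zero by lia. change (0 + f (S q) = f (S q)). ring.
    + rewrite (IH k) by (try lia; intros l0 ? ?; apply Hf; lia).
      rewrite (Hf (S q)) by lia. ring.
Qed.

Lemma sumR_ge_term (f : nat -> R) p q k : (p <= k <= q)%nat ->
  (forall l, 0 <= f l) -> f k <= sum_n_m f p q.
Proof.
  intros Hk Hf.
  set (g := fun l => if Nat.eqb l k then f l else 0).
  apply Rle_trans with (sum_n_m g p q).
  - rewrite (sumR_single g p q k Hk). unfold g. rewrite Nat.eqb_refl. lra.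
    intros l _ Hl. unfold g. apply Nat.eqb_neq in Hl. rewrite Hl. reflexivity.
  - apply sum_n_m_le. intros l. unfold g.
    destruct (Nat.eqb l k); [lra|apply Hf].
Qed.

Lemma homog (m : nat) : forall A : nat -> nat -> R, exists b : nat -> R,
  (exists k, (k <= m)%nat /\ b k <> 0) /\
  forall i, (i < m)%nat -> sum_n_m (fun k => A i k * b k) 0 m = 0 :> R.
Proof.
  induction m as [|m IH]; intros A.
  - exists (fun _ => 1). split. exists 0%nat. split; [lia|lra]. intros; lia.
  - destruct (classic (exists i, (i <= m)%nat /\ A i (S m) <> 0)) as [[i0 [Hi0 Hp]]|Hno].
    + set (p := A i0 (S m)) in *.
      set (r := fun i => if Nat.ltb i i0 then i else S i).
      destruct (IH (fun i k => A (r i) k - A (r i) (S m) / p * A i0 k)) as [b' [[k0 [Hk0 Hb0]] Hb']].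
      set (S0 := sum_n_m (fun k => A i0 k * b' k) 0 m).
      exists (fun k => if Nat.leb k m then b' k else - S0 / p).
      split.
      * exists k0. split; [lia|]. replace (Nat.leb k0 m) with true; auto.
        symmetry. apply Nat.leb_le. lia.
      * intros i Hi. rewrite sumR_Sm by lia.
        replace (Nat.leb (S m) m) with false by (symmetry; apply Nat.leb_gt; lia).
        rewrite (sum_n_m_ext_loc _ (fun k => A i k * b' k)).
        2:{ intros k Hk. replace (Nat.leb k m) with true; auto. symmetry; apply Nat.leb_le; lia. }
        destruct (Nat.eq_dec i i0) as [->|Hne].
        -- fold S0. fold p. field. exact Hp.
        -- set (i' := if Nat.ltb i i0 then i else pred i).
           assert (Hri : r i' = i).
           { unfold r, i'. destruct (Nat.ltb i i0) eqn:E.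
             - rewrite E. reflexivity.
             - apply Nat.ltb_ge in E. destruct (Nat.ltb (pred i) i0) eqn:E2.
               + apply Nat.ltb_lt in E2. lia.
               + lia. }
           assert (Hi' : (i' < m)%nat).
           { unfold i'. destruct (Nat.ltb i i0) eqn:E.
             - apply Nat.ltb_lt in E. lia.
             - apply Nat.ltb_ge in E. lia. }
           specialize (Hb' i' Hi'). simpl in Hb'. rewrite Hri in Hb'.
           rewrite (sum_n_m_ext_loc _ (fun k => A i k * b' k - A i (S m) / p * (A i0 k * b' k))) in Hb'
             by (intros; rg).
           rewrite sumR_minus, sumR_scal in Hb'. fold S0 in Hb'.
           assert (E : sum_n_m (fun k => A i k * b' k) 0 m = A i (S m) / p * S0) by lra.
           rewrite E. field. exact Hp.
    + exists (fun k => if Nat.eqb k (S m) then 1 else 0). split.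
      * exists (S m). split; [lia|]. rewrite Nat.eqb_refl. lra.
      * intros i Hi. rewrite sumR_Sm by lia. rewrite Nat.eqb_refl.
        rewrite sumR_zero.
        -- assert (A i (S m) = 0).
           { destruct (Req_dec (A i (S m)) 0); auto. exfalso; apply Hno; exists i; split; [lia|auto]. }
           rewrite H. ring.
        -- intros k Hk. replace (Nat.eqb k (S m)) with false. ring.
           symmetry; apply Nat.eqb_neq; lia.
Qed.



Lemma sumR_le_loc (f g : nat -> R) p q :
  (forall k, (p <= k <= q)%nat -> f k <= g k) -> sum_n_m f p q <= sum_n_m g p q.
Proof.
  induction q as [|q IH]; intros Hf.
  - destruct p as [|p].
    + rewrite !sum_n_n. apply Hf; lia.
    + rewrite !sum_n_m_zero by lia. apply Rle_refl.
  - destruct (Compare_dec.le_lt_dec p (S q)) as [Hpq|Hpq].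
    + destruct (Compare_dec.le_lt_dec p q) as [Hpq'|Hpq'].
      * rewrite !sumR_Sm by lia. apply Rplus_le_compat.
        apply IH; intros; apply Hf; lia. apply Hf; lia.
      * assert (p = S q) by lia. subst p. rewrite !sum_n_n. apply Hf; lia.
    + rewrite !sum_n_m_zero by lia. apply Rle_refl.
Qed.

Lemma V_plus {H : ModuleSpace R_Ring} {V : H -> Prop} : subspace V ->
  forall x y, V x -> V y -> V (plus x y).
Proof. intros [V0 Vl] x y Hx Hy. rewrite <- (scal_1 x). auto. Qed.

Lemma V_scal {H : ModuleSpace R_Ring} {V : H -> Prop} : subspace V ->
  forall c x, V x -> V (scal c x).
Proof. intros [V0 Vl] c x Hx. replace (scal c x) with (plus (scal c x) zero) by apply plus_zero_r. auto. Qed.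

Lemma V_minus {H : ModuleSpace R_Ring} {V : H -> Prop} : subspace V ->
  forall x y, V x -> V y -> V (minus x y).
Proof.
  intros HV x y Hx Hy. change (V (plus x (opp y))). apply V_plus; auto.
  rewrite <- scal_opp_one. apply V_scal; auto.
Qed.

Lemma a_zero {H : ModuleSpace R_Ring} {V : H -> Prop} {a : H -> H -> R} : subspace V -> energy_form V a ->
  forall z, V z -> a zero z = 0.
Proof.
  intros [V0 Vl] [As [Al Ap]] z Hz. pose proof (Al 1 zero zero z V0 V0 Hz) as E.
  rewrite scal_1, plus_zero_r in E. lra.
Qed.

Lemma a_scal {H : ModuleSpace R_Ring} {V : H -> Prop} {a : H -> H -> R} : subspace V -> energy_form V a ->
  forall c x z, V x -> V z -> a (scal c x) z = c * a x z.
Proof.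
  intros HV Ha c x z Hx Hz. pose proof HV as [V0 Vl]. pose proof Ha as [As [Al Ap]].
  pose proof (Al c x zero z Hx V0 Hz) as E. rewrite plus_zero_r in E.
  rewrite E, (a_zero HV Ha z Hz). ring.
Qed.

Lemma a_plus {H : ModuleSpace R_Ring} {V : H -> Prop} {a : H -> H -> R} : subspace V -> energy_form V a ->
  forall x y z, V x -> V y -> V z -> a (plus x y) z = a x z + a y z.
Proof.
  intros HV Ha x y z Hx Hy Hz. pose proof Ha as [As [Al Ap]].
  pose proof (Al 1 x y z Hx Hy Hz) as E. rewrite scal_1 in E. rewrite E. ring.
Qed.

Lemma a_minus {H : ModuleSpace R_Ring} {V : H -> Prop} {a : H -> H -> R} : subspace V -> energy_form V a ->
  forall x y z, V x -> V y -> V z -> a (minus x y) z = a x z - a y z.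
Proof.
  intros HV Ha x y z Hx Hy Hz. unfold minus.
  rewrite <- scal_opp_one.
  rewrite (a_plus HV Ha); auto. rewrite (a_scal HV Ha); auto.
  change (opp one) with (Ropp 1). ring. apply V_scal; auto.
Qed.

Lemma ip_sum {H : ModuleSpace R_Ring} {ip : H -> H -> R} : inner_product ip ->
  forall (g : nat -> H) z p q, ip (sum_n_m g p q) z = sum_n_m (fun k => ip (g k) z) p q.
Proof.
  intros Hip g z p q.
  refine (proj2 (lin_sum (fun _ => True) (fun x => ip x z) g _ _ _ _ p q _)); auto.
  apply (ip_zero_l Hip). intros; apply (ip_plus_l Hip).
Qed.

Lemma V_sum {H : ModuleSpace R_Ring} {V : H -> Prop} : subspace V ->
  forall (g : nat -> H) p q, (forall k, (p <= k <= q)%nat -> V (g k)) -> V (sum_n_m g p q).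
Proof.
  intros HV g p q Hg.
  refine (proj1 (lin_sum V (fun _ => 0) g _ _ _ _ p q Hg)); auto.
  apply HV. apply V_plus; auto. intros; ring.
Qed.

Lemma a_sum {H : ModuleSpace R_Ring} {V : H -> Prop} {a : H -> H -> R} : subspace V -> energy_form V a ->
  forall (g : nat -> H) z p q, V z -> (forall k, (p <= k <= q)%nat -> V (g k)) ->
  a (sum_n_m g p q) z = sum_n_m (fun k => a (g k) z) p q.
Proof.
  intros HV Ha g z p q Hz Hg.
  refine (proj2 (lin_sum V (fun x => a x z) g _ _ _ _ p q Hg)).
  apply HV. apply V_plus; auto. apply (a_zero HV Ha z Hz).
  intros; apply (a_plus HV Ha); auto.
Qed.

Lemma mono_gen (l : nat -> R) (lo hi : nat) :
  (forall i, (lo <= i)%nat -> (i < hi)%nat -> l i <= l (S i)) ->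
  forall i k, (lo <= i)%nat -> (i <= k)%nat -> (k <= hi)%nat -> l i <= l k.
Proof.
  intros Hm i k Hi Hik Hk. induction k as [|k IH].
  - assert (i = 0%nat) by lia. subst. lra.
  - destruct (Nat.eq_dec i (S k)) as [->|Hne]. lra.
    apply Rle_trans with (l k). apply IH; lia. apply Hm; lia.
Qed.



Lemma minmax {H : ModuleSpace R_Ring} (ip : H -> H -> R) (V Vh : H -> Prop) (a : H -> H -> R)
  (n : nat) (lam lamh : nat -> R) (u uh : nat -> H) :
  inner_product ip -> subspace V -> energy_form V a -> subspace Vh ->
  (forall v, Vh v -> V v) ->
  exact_eigenpairs ip V a lam u -> discrete_eigenpairs ip Vh n a lamh uh ->
  forall j, (1 <= j <= n)%nat -> lam j <= lamh j.
Proof.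
  intros Hip HV Ha HVh HVhV Hex Hdisc j Hj.
  destruct Hex as [Eu [Lam1 [Lmono [Uorth Ubasis]]]].
  destruct Hdisc as [Euh [Lamh1 [Lhmono Uhorth]]].
  destruct j as [|m]. lia.
  destruct (homog m (fun i k => ip (uh (S k)) (u (S i)))) as [b [[k0 [Hk0 Hbk0]] Hb]].
  set (v := sum_n_m (fun k => scal (b k) (uh (S k))) 0 m).
  assert (HuhVh : forall k, (k <= m)%nat -> Vh (uh (S k))).
  { intros k Hk. apply (Euh (S k)). lia. }
  assert (Vhv : Vh v).
  { apply (V_sum HVh). intros k Hk. apply (V_scal HVh). apply HuhVh; lia. }
  assert (Vv : V v) by auto.
  assert (Fip : forall z, ip v z = sum_n_m (fun k => b k * ip (uh (S k)) z) 0 m).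
  { intros z. unfold v. rewrite (ip_sum Hip). apply sum_n_m_ext_loc. intros k Hk.
    rewrite (ip_scal_l Hip). reflexivity. }
  assert (F2 : forall i, (i < m)%nat -> ip v (u (S i)) = 0).
  { intros i Hi. rewrite Fip. rewrite <- (Hb i Hi). apply sum_n_m_ext_loc.
    intros k Hk. rg. }
  assert (F3 : forall k, (k <= m)%nat -> ip v (uh (S k)) = b k).
  { intros k Hk. rewrite Fip. rewrite (sumR_single _ 0 m k).
    - rewrite Uhorth by lia. rewrite Nat.eqb_refl. ring.
    - lia.
    - intros l Hl Hne. rewrite Uhorth by lia.
      replace (Nat.eqb (S l) (S k)) with false. ring.
      symmetry. apply Nat.eqb_neq. lia. }
  assert (F4 : ip v v = sum_n_m (fun k => b k ^ 2) 0 m).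
  { rewrite Fip. apply sum_n_m_ext_loc. intros k Hk.
    rewrite (ip_sym Hip), F3 by lia. rg. }
  assert (Pos : 0 < ip v v).
  { rewrite F4. apply Rlt_le_trans with (b k0 ^ 2).
    - apply pow2_gt_0. exact Hbk0.
    - apply (sumR_ge_term (fun k => b k ^ 2)). lia. intros; apply pow2_ge_0. }
  assert (Up : a v v <= lamh (S m) * ip v v).
  { unfold v at 1. rewrite (a_sum HV Ha); auto.
    2:{ intros k Hk. apply (V_scal HV). apply HVhV, HuhVh; lia. }
    rewrite F4, <- sumR_scal. apply sumR_le_loc. intros k Hk.
    rewrite (a_scal HV Ha) by (auto; apply HVhV, HuhVh; lia).
    destruct (Euh (S k) ltac:(lia)) as [_ Eq]. rewrite (Eq v Vhv).
    rewrite (ip_sym Hip), F3 by lia.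
    assert (lamh (S k) <= lamh (S m)).
    { apply (mono_gen lamh 1 n); auto; lia. }
    pose proof (pow2_ge_0 (b k)). simpl. nra. }
  assert (Lmono' : forall i k, (1 <= i)%nat -> (i <= k)%nat -> lam i <= lam k).
  { intros i k Hi Hik. apply (mono_gen lam 1 k); auto; lia. }
  assert (Low : forall N, (1 <= N)%nat ->
     lam (S m) * (ip v v - ip (minus v (sum_n_m (fun i => scal (ip v (u i)) (u i)) 1 N))
                                (minus v (sum_n_m (fun i => scal (ip v (u i)) (u i)) 1 N)))
     <= a v v).
  { intros N HN.
    set (c := fun i => ip v (u i)).
    set (S_ := sum_n_m (fun i => scal (c i) (u i)) 1 N).
    set (w := minus v S_).
    assert (Vu : forall i, (1 <= i)%nat -> V (u i)) by (intros i Hi; apply (Eu i Hi)).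
    assert (VS : V S_).
    { apply (V_sum HV). intros k Hk. apply (V_scal HV). apply Vu; lia. }
    assert (Vw : V w) by (apply (V_minus HV); auto).
    assert (ipS : forall z, ip S_ z = sum_n_m (fun k => c k * ip (u k) z) 1 N).
    { intros z. unfold S_. rewrite (ip_sum Hip). apply sum_n_m_ext_loc. intros k Hk.
      rewrite (ip_scal_l Hip). reflexivity. }
    assert (aS : forall z, V z -> a S_ z = sum_n_m (fun k => c k * lam k * ip (u k) z) 1 N).
    { intros z Hz. unfold S_. rewrite (a_sum HV Ha); auto.
      2:{ intros k Hk. apply (V_scal HV). apply Vu; lia. }
      apply sum_n_m_ext_loc. intros k Hk.
      rewrite (a_scal HV Ha) by (auto; apply Vu; lia).
      destruct (Eu k ltac:(lia)) as [_ Eq]. rewrite (Eq z Hz). rg. }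
    assert (uS : forall i, (1 <= i <= N)%nat -> ip (u i) S_ = c i).
    { intros i Hi. rewrite (ip_sym Hip), ipS. rewrite (sumR_single _ 1 N i Hi).
      - rewrite Uorth by lia. rewrite Nat.eqb_refl. ring.
      - intros l Hl Hne. rewrite Uorth by lia.
        replace (Nat.eqb l i) with false. ring. symmetry; apply Nat.eqb_neq; lia. }
    assert (uw : forall i, (1 <= i <= N)%nat -> ip (u i) w = 0).
    { intros i Hi. unfold w. rewrite (ip_minus_r Hip), uS by lia.
      rewrite (ip_sym Hip). unfold c. ring. }
    assert (aSw : a S_ w = 0).
    { rewrite aS by auto. apply sumR_zero. intros k Hk. rewrite uw by lia. ring. }
    assert (ipSw : ip S_ w = 0).
    { rewrite ipS. apply sumR_zero. intros k Hk. rewrite uw by lia. ring. }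
    assert (aww : a w w = a v v - sum_n_m (fun k => lam k * c k ^ 2) 1 N).
    { assert (E1 : a w w = a v w) by
        (unfold w at 1; rewrite (a_minus HV Ha), aSw by auto; ring).
      rewrite E1. pose proof Ha as [As _]. rewrite As by auto.
      unfold w. rewrite (a_minus HV Ha) by auto. rewrite aS by auto.
      f_equal. apply sum_n_m_ext_loc. intros k Hk. rewrite (ip_sym Hip). unfold c. rg. }
    assert (ipww : ip w w = ip v v - sum_n_m (fun k => c k ^ 2) 1 N).
    { assert (E1 : ip w w = ip v w) by
        (unfold w at 1; rewrite (ip_minus_l Hip), ipSw; ring).
      rewrite E1. unfold w. rewrite (ip_minus_r Hip). rewrite (ip_sym Hip v S_), ipS.
      f_equal. apply sum_n_m_ext_loc. intros k Hk. rewrite (ip_sym Hip). unfold c. rg. }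
    assert (Haww : 0 <= a w w) by (pose proof Ha as [_ [_ Ap]]; auto).
    assert (Sle : lam (S m) * sum_n_m (fun k => c k ^ 2) 1 N <= sum_n_m (fun k => lam k * c k ^ 2) 1 N).
    { rewrite <- sumR_scal. apply sumR_le_loc. intros k Hk.
      destruct (Compare_dec.le_lt_dec k m) as [Hkm|Hkm].
      - destruct k as [|k']. lia. unfold c. rewrite F2 by lia. simpl. lra.
      - assert (lam (S m) <= lam k) by (apply Lmono'; lia).
        pose proof (pow2_ge_0 (c k)). nra. }
    change (lam (S m) * (ip v v - ip w w) <= a v v). rewrite ipww. nra. }
  assert (Lam_pos : 0 < lam (S m)).
  { apply Rlt_le_trans with (lam 1%nat); auto. apply Lmono'; lia. }
  assert (Lowf : lam (S m) * ip v v <= a v v).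
  { destruct (Rle_lt_dec (lam (S m) * ip v v) (a v v)) as [?|Hlt]; auto.
    exfalso.
    set (eps := (lam (S m) * ip v v - a v v) / lam (S m)).
    assert (Heps : 0 < eps) by (unfold eps; apply Rdiv_lt_0_compat; lra).
    pose proof (Ubasis v) as L. apply is_lim_seq_spec in L.
    destruct (L (mkposreal (sqrt eps) (sqrt_lt_R0 _ Heps))) as [N0 HN0].
    specialize (HN0 (S N0) ltac:(lia)). specialize (Low (S N0) ltac:(lia)).
    simpl in HN0. rewrite Rminus_0_r in HN0.
    set (w := minus v (sum_n_m (fun i => scal (ip v (u i)) (u i)) 1 (S N0))) in *.
    rewrite Rabs_pos_eq in HN0 by apply l2norm_nonneg.
    assert (ip w w < eps).
    { rewrite <- (l2norm_sq Hip w). pose proof (l2norm_nonneg ip w).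
      rewrite <- (sqrt_sqrt eps) by lra. pose proof (sqrt_pos eps). nra. }
    unfold eps in H0.
    assert (lam (S m) * ip w w < lam (S m) * ip v v - a v v).
    { apply Rmult_lt_compat_l with (r := lam (S m)) in H0; auto.
      replace (lam (S m) * ((lam (S m) * ip v v - a v v) / lam (S m))) with
        (lam (S m) * ip v v - a v v) in H0 by (field; lra). exact H0. }
    nra. }
  nra.
Qed.


Definition rc (T : R) (g : R -> R) : Prop :=
  forall s0, 0 <= s0 <= T -> forall eps, 0 < eps -> exists delta, 0 < delta /\
    forall s, 0 <= s <= T -> Rabs (s - s0) < delta -> Rabs (g s - g s0) < eps.

Lemma rc_ip {H : ModuleSpace R_Ring} {ip : H -> H -> R} (T : R) (f : R -> H) (w : H) :
  inner_product ip -> continuous_on_0T ip T f -> rc T (fun tau => ip (f tau) w).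
Proof.
  intros Hip Hf s0 Hs0 eps Heps.
  pose proof (l2norm_nonneg ip w) as Nw.
  destruct (Hf s0 Hs0 (eps / (l2norm ip w + 1))) as [d [Hd Hd']].
  { apply Rdiv_lt_0_compat; lra. }
  exists d. split; auto. intros s Hs Hss.
  specialize (Hd' s Hs Hss).
  rewrite <- (ip_minus_l Hip).
  eapply Rle_lt_trans. apply (cauchy_schwarz Hip).
  pose proof (l2norm_nonneg ip (minus (f s) (f s0))).
  apply Rle_lt_trans with (eps / (l2norm ip w + 1) * l2norm ip w).
  { apply Rmult_le_compat_r; lra. }
  apply Rlt_le_trans with (eps / (l2norm ip w + 1) * (l2norm ip w + 1)).
  { apply Rmult_lt_compat_l. apply Rdiv_lt_0_compat; lra. lra. }
  right. field. lra.
Qed.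

Lemma rc_norm {H : ModuleSpace R_Ring} {ip : H -> H -> R} (T : R) (f : R -> H) :
  inner_product ip -> continuous_on_0T ip T f -> rc T (fun tau => l2norm ip (f tau)).
Proof.
  intros Hip Hf s0 Hs0 eps Heps.
  destruct (Hf s0 Hs0 eps Heps) as [d [Hd Hd']].
  exists d. split; auto. intros s Hs Hss.
  eapply Rle_lt_trans. apply (l2norm_rev Hip). auto.
Qed.

Lemma rc_minus T g1 g2 : rc T g1 -> rc T g2 -> rc T (fun x => g1 x - g2 x).
Proof.
  intros H1 H2 s0 Hs0 eps Heps.
  destruct (H1 s0 Hs0 (eps/2)) as [d1 [Hd1 Hd1']]. lra.
  destruct (H2 s0 Hs0 (eps/2)) as [d2 [Hd2 Hd2']]. lra.
  exists (Rmin d1 d2). split. apply Rmin_glb_lt; auto.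
  intros s Hs Hss.
  assert (Rabs (s - s0) < d1) by (eapply Rlt_le_trans; [exact Hss| apply Rmin_l]).
  assert (Rabs (s - s0) < d2) by (eapply Rlt_le_trans; [exact Hss| apply Rmin_r]).
  specialize (Hd1' s Hs H). specialize (Hd2' s Hs H0).
  replace (g1 s - g2 s - (g1 s0 - g2 s0)) with ((g1 s - g1 s0) - (g2 s - g2 s0)) by ring.
  eapply Rle_lt_trans. apply Rabs_triang. rewrite Rabs_Ropp. lra.
Qed.

Definition clamp (t x : R) : R := Rmax 0 (Rmin t x).

Lemma clamp_range t x : 0 <= t -> 0 <= clamp t x <= t.
Proof. intros Ht. unfold clamp, Rmax, Rmin. repeat destruct Rle_dec; lra. Qed.

Lemma clamp_id t x : 0 <= x <= t -> clamp t x = x.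
Proof. intros Ht. unfold clamp, Rmax, Rmin. repeat destruct Rle_dec; lra. Qed.

Lemma clamp_lip t x y : 0 <= t -> Rabs (clamp t x - clamp t y) <= Rabs (x - y).
Proof.
  intros Ht. unfold clamp, Rmax, Rmin.
  pose proof (Rle_abs (x - y)). pose proof (Rabs_maj2 (x - y)).
  repeat destruct Rle_dec; apply Rabs_le; lra.
Qed.

Lemma rc_cont T g t : rc T g -> 0 <= t <= T -> forall z, continuous (fun x => g (clamp t x)) z.
Proof.
  intros Hg Ht z. apply continuity_pt_filterlim.
  intros eps Heps.
  pose proof (clamp_range t z ltac:(lra)).
  destruct (Hg (clamp t z) ltac:(lra) eps Heps) as [d [Hd Hd']].
  exists d. split; auto. intros x [_ Hx]. simpl in *. unfold R_dist in *.
  pose proof (clamp_range t x ltac:(lra)).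
  apply Hd'. lra. eapply Rle_lt_trans. apply clamp_lip. lra. exact Hx.
Qed.

Lemma int_kg T (k g : R -> R) t : (forall z, continuous k z) -> rc T g -> 0 <= t <= T ->
  ex_RInt (fun tau => k tau * g tau) 0 t.
Proof.
  intros Hk Hg Ht.
  apply (ex_RInt_ext (fun tau => k tau * g (clamp t tau))).
  { intros x Hx. rewrite Rmin_left, Rmax_right in Hx by lra.
    rewrite clamp_id by lra. reflexivity. }
  assert (C : forall z, continuous (fun tau => k tau * g (clamp t tau)) z).
  { intros z. apply (continuous_mult k (fun y => g (clamp t y))). apply Hk. exact (rc_cont T g t Hg Ht z). }
  exact (ex_RInt_continuous (V := R_CompleteNormedModule) _ 0 t (fun z _ => C z)).
Qed.

Lemma int_g T (g : R -> R) t : rc T g -> 0 <= t <= T -> ex_RInt g 0 t.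
Proof.
  intros Hg Ht. apply (ex_RInt_ext (fun tau => (fun _ => 1) tau * g tau)).
  { intros x _. simpl. ring. }
  apply (int_kg T); auto. intros z; apply continuous_const.
Qed.

Lemma abs_RInt_bound (F h : R -> R) t : 0 <= t -> ex_RInt F 0 t -> ex_RInt h 0 t ->
  (forall tau, 0 < tau < t -> Rabs (F tau) <= h tau) -> Rabs (RInt F 0 t) <= RInt h 0 t.
Proof.
  intros Ht HF Hh Hb. apply Rabs_le. split.
  - assert (Ho : ex_RInt (fun x => - h x) 0 t) by exact (ex_RInt_opp (V := R_NormedModule) h 0 t Hh).
    assert (E : RInt (fun x => - h x) 0 t = - (RInt h 0 t)) by exact (RInt_opp (V := R_CompleteNormedModule) h 0 t Hh).
    rewrite <- E. apply (RInt_le _ _ 0 t Ht Ho HF).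
    intros x Hx. specialize (Hb x Hx). apply Rabs_le_between in Hb. lra.
  - apply (RInt_le _ _ 0 t Ht HF Hh). intros x Hx. specialize (Hb x Hx). apply Rabs_le_between in Hb. lra.
Qed.

Lemma RInt_ge0 (h : R -> R) t : 0 <= t -> ex_RInt h 0 t -> (forall tau, 0 < tau < t -> 0 <= h tau) ->
  0 <= RInt h 0 t.
Proof.
  intros Ht Hh Hb.
  apply Rle_trans with (RInt (fun _ => 0) 0 t).
  - rewrite (RInt_const (V := R_CompleteNormedModule)). change (scal (t - 0) 0) with ((t - 0) * 0). lra.
  - apply (RInt_le _ _ 0 t Ht (ex_RInt_const (V := R_NormedModule) 0 t 0) Hh). exact Hb.
Qed.


Lemma vec_id {H : ModuleSpace R_Ring} (x y : H) (p q : R) :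
  minus (scal p x) (scal q y) = plus (scal (p - q) x) (scal q (minus x y)).
Proof.
  change (minus x y) with (plus x (opp y)). change (minus (scal p x) (scal q y)) with (plus (scal p x) (opp (scal q y))).
  rewrite (scal_distr_l q x (opp y)).
  rewrite (scal_opp_r q y).
  replace (scal (p - q) x) with (plus (scal p x) (opp (scal q x))).
  2:{ change (p - q) with (@plus R_Ring p (opp q)). rewrite (scal_distr_r p (opp q) x). f_equal. exact (eq_sym (scal_opp_l q x)). }
  rewrite <- (plus_assoc (scal p x) (opp (scal q x))), (plus_assoc (opp (scal q x))), plus_opp_l, plus_zero_l.
  reflexivity.
Qed.

Lemma abs_mul_le a b x y : Rabs a <= x -> Rabs b <= y -> Rabs (a * b) <= x * y.
Proof.
  intros Ha Hb. rewrite Rabs_mult. apply Rmult_le_compat; auto; apply Rabs_pos.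
Qed.

Lemma final_ineq (om omh dl N0 N1 Nf M A A0 B B0 I1 I2 I3 I0 ch c sh s : R) :
 0 < om -> om <= omh -> 0 <= dl -> 0 <= M ->
 Rabs (A - A0) <= N0*dl -> Rabs A0 <= N0 -> Rabs (B - B0) <= N1*dl -> Rabs B0 <= N1 ->
 Rabs I1 <= dl*Nf -> Rabs I2 <= Nf -> Rabs I3 <= M*Nf -> Rabs I0 <= Nf -> I2 - I0 = I3 ->
 Rabs ch <= 1 -> Rabs sh <= 1 -> Rabs c <= 1 -> Rabs s <= 1 ->
 Rabs ((A*ch + B/omh*sh + /omh*(I1+I2)) - (A0*c + B0/om*s + /om*I0))
   + Rabs (A0*c + B0/om*s + /om*I0) * dl
 <= N0*(2*dl + Rabs(ch - c)) + N1/om*((omh-om)/om + 2*dl + Rabs(sh - s))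
    + /om*Nf*((omh-om)/om + 2*dl + M).
Proof.
  intros Hom Homh Hdl HM HA HA0 HB HB0 HI1 HI2 HI3 HI0 E3 Hch Hsh Hc Hs.
  assert (Homh' : 0 < omh) by lra.
  assert (Iv1 : Rabs (/omh) <= /om).
  { rewrite Rabs_pos_eq by (left; apply Rinv_0_lt_compat; lra). apply Rinv_le_contravar; lra. }
  assert (Iv0 : Rabs (/om) <= /om).
  { rewrite Rabs_pos_eq by (left; apply Rinv_0_lt_compat; lra). lra. }
  assert (Iv2 : Rabs (/omh - /om) <= (omh - om)/(om*om)).
  { replace (/omh - /om) with (- ((omh - om) / (om * omh))) by (field; lra).
    rewrite Rabs_Ropp, Rabs_pos_eq.
    - unfold Rdiv. apply Rmult_le_compat_l. lra.
      apply Rinv_le_contravar. nra. apply Rmult_le_compat_l; lra.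
    - apply Rdiv_le_0_compat; nra. }
  assert (N0p : 0 <= N0) by (eapply Rle_trans; [apply Rabs_pos|exact HA0]).
  assert (N1p : 0 <= N1) by (eapply Rle_trans; [apply Rabs_pos|exact HB0]).
  assert (Nfp : 0 <= Nf) by (eapply Rle_trans; [apply Rabs_pos|exact HI0]).
  assert (Hom' : 0 < /om) by (apply Rinv_0_lt_compat; lra).
  replace ((A*ch + B/omh*sh + /omh*(I1+I2)) - (A0*c + B0/om*s + /om*I0)) with
    ((A-A0)*ch + A0*(ch-c) + (B-B0)*(/omh*sh) + B0*((/omh - /om)*sh) + B0*(/om*(sh - s))
     + I1*/omh + I2*(/omh - /om) + I3*/om) by (rewrite <- E3; field; lra).
  pose proof (abs_mul_le _ _ _ _ HA Hch) as T1.
  pose proof (abs_mul_le _ _ _ _ HA0 (Rle_refl (Rabs (ch - c)))) as T2.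
  pose proof (abs_mul_le _ _ _ _ HB (abs_mul_le _ _ _ _ Iv1 Hsh)) as T3.
  pose proof (abs_mul_le _ _ _ _ HB0 (abs_mul_le _ _ _ _ Iv2 Hsh)) as T4.
  pose proof (abs_mul_le _ _ _ _ HB0 (abs_mul_le _ _ _ _ Iv0 (Rle_refl (Rabs (sh - s))))) as T5.
  pose proof (abs_mul_le _ _ _ _ HI1 Iv1) as T6.
  pose proof (abs_mul_le _ _ _ _ HI2 Iv2) as T7.
  pose proof (abs_mul_le _ _ _ _ HI3 Iv0) as T8.
  pose proof (abs_mul_le _ _ _ _ HA0 Hc) as D1.
  pose proof (abs_mul_le _ _ _ _ HB0 (abs_mul_le _ _ _ _ Iv0 Hs)) as D2.
  pose proof (abs_mul_le _ _ _ _ Iv0 HI0) as D3.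
  assert (Dd : Rabs (A0*c + B0/om*s + /om*I0) <= N0*1 + N1*(/om*1) + /om*Nf).
  { eapply Rle_trans. apply Rabs_triang. apply Rplus_le_compat; [|exact D3].
    eapply Rle_trans. apply Rabs_triang. apply Rplus_le_compat; [exact D1|].
    replace (B0/om*s) with (B0*(/om*s)) by (unfold Rdiv; ring). exact D2. }
  assert (Sum : forall x1 x2 x3 x4 x5 x6 x7 x8 : R,
    Rabs (x1+x2+x3+x4+x5+x6+x7+x8) <= Rabs x1 + Rabs x2 + Rabs x3 + Rabs x4 + Rabs x5 + Rabs x6 + Rabs x7 + Rabs x8).
  { intros. repeat (eapply Rle_trans; [apply Rabs_triang|apply Rplus_le_compat_r]). apply Rle_refl. }
  eapply Rle_trans. apply Rplus_le_compat. apply Sum.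
  apply Rmult_le_compat_r. exact Hdl. exact Dd.
  assert (0 <= (omh - om) / (om * om)) by (apply Rdiv_le_0_compat; nra).
  assert (EQ : N0*(2*dl + Rabs(ch - c)) + N1/om*((omh-om)/om + 2*dl + Rabs(sh - s))
    + /om*Nf*((omh-om)/om + 2*dl + M) =
    N0*dl*1 + N0*Rabs(ch-c) + N1*dl*(/om*1) + N1*((omh-om)/(om*om)*1) + N1*(/om*Rabs(sh-s))
    + dl*Nf*/om + Nf*((omh-om)/(om*om)) + M*Nf*/om + (N0*1 + N1*(/om*1) + /om*Nf)*dl)
    by (field; lra).
  rewrite EQ. lra.
Qed.


Lemma max_ge (g : R -> R) t B x : (forall tau, 0 <= tau <= t -> g tau <= B) ->
  0 <= x <= t -> g x <= max_on_0t g t.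
Proof.
  intros Hb Hx. unfold max_on_0t.
  destruct (Lub_Rbar_correct (fun y => exists tau, 0 <= tau <= t /\ y = g tau)) as [Hub Hl].
  destruct (Lub_Rbar (fun y => exists tau, 0 <= tau <= t /\ y = g tau)) as [r| |] eqn:E.
  - specialize (Hub (g x) (ex_intro _ x (conj Hx eq_refl))). simpl in Hub. exact Hub.
  - exfalso. assert (Hu : is_ub_Rbar (fun y => exists tau, 0 <= tau <= t /\ y = g tau) (Finite B)).
    { intros y [tau [Ht ->]]. simpl. apply Hb; auto. }
    specialize (Hl _ Hu). simpl in Hl. exact Hl.
  - exfalso. specialize (Hub (g x) (ex_intro _ x (conj Hx eq_refl))). simpl in Hub. exact Hub.
Qed.

Lemma abs_sin_le1 x : Rabs (sin x) <= 1.
Proof. pose proof (SIN_bound x). apply Rabs_le. lra. Qed.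
Lemma abs_cos_le1 x : Rabs (cos x) <= 1.
Proof. pose proof (COS_bound x). apply Rabs_le. lra. Qed.

Theorem theorem4p3
  (H : ModuleSpace R_Ring) (ip : H -> H -> R) (V Vh : H -> Prop) (a : H -> H -> R)
  (n : nat) (lam lamh : nat -> R) (u uh : nat -> H)
  (T : R) (u0 v0 : H) (f : R -> H)
  (Hip : inner_product ip)
  (HV : subspace V) (Ha : energy_form V a)
  (HVh : subspace_of_dim Vh n) (HVhV : forall v, Vh v -> V v)
  (Hex : exact_eigenpairs ip V a lam u)
  (Hdisc : discrete_eigenpairs ip Vh n a lamh uh)
  (HT : 0 < T) (Hf : continuous_on_0T ip T f) :
  forall (j : nat) (t : R), (1 <= j <= n)%nat -> 0 <= t <= T ->
    let om := sqrt (lam j) in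
    let omh := sqrt (lamh j) in
    let e := minus (scal (dcoef ip (lamh j) (uh j) u0 v0 f t) (uh j))
                   (scal (dcoef ip (lam j) (u j) u0 v0 f t) (u j)) in
    l2norm ip e <=
      l2norm ip u0 * (2 * l2norm ip (minus (uh j) (u j))
                      + Rabs (cos (omh * t) - cos (om * t)))
    + l2norm ip v0 / om * ((omh - om) / om + 2 * l2norm ip (minus (uh j) (u j))
                      + Rabs (sin (omh * t) - sin (om * t)))
    + / om * RInt (fun tau => l2norm ip (f tau)) 0 t
        * ((omh - om) / om + 2 * l2norm ip (minus (uh j) (u j))
           + max_on_0t (fun tau => Rabs (sin (omh * tau) - sin (om * tau))) t).
Proof.
  intros j t Hj Ht om omh e.
  pose proof Hex as [Eu [Lam1 [Lmono [Uorth _]]]].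
  pose proof Hdisc as [Euh [Lamh1 [_ Uhorth]]].
  assert (Hlj : lam j <= lamh j) by
    (apply (minmax ip V Vh a n lam lamh u uh); auto; apply HVh).
  assert (Hl1 : lam 1%nat <= lam j) by (apply (mono_gen lam 1 j); auto; lia).
  assert (Hom : 0 < om) by (unfold om; apply sqrt_lt_R0; lra).
  assert (Homh : om <= omh) by (unfold om, omh; apply sqrt_le_1_alt; lra).
  assert (Nu : l2norm ip (u j) = 1).
  { apply l2norm_ip1. rewrite Uorth by lia. rewrite Nat.eqb_refl. reflexivity. }
  assert (Nuh : l2norm ip (uh j) = 1).
  { apply l2norm_ip1. rewrite Uhorth by lia. rewrite Nat.eqb_refl. reflexivity. }
  set (dl := l2norm ip (minus (uh j) (u j))).
  assert (Hdl : 0 <= dl) by apply l2norm_nonneg.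
  set (dh := dcoef ip (lamh j) (uh j) u0 v0 f t).
  set (d := dcoef ip (lam j) (u j) u0 v0 f t).
  assert (Step1 : l2norm ip e <= Rabs (dh - d) + Rabs d * dl).
  { unfold e. fold dh d. rewrite vec_id.
    eapply Rle_trans. apply (l2norm_triangle Hip).
    rewrite !(l2norm_scal Hip), Nuh. fold dl. lra. }
  eapply Rle_trans. exact Step1.
  set (Gh := fun tau => ip (f tau) (uh j)).
  set (G := fun tau => ip (f tau) (u j)).
  set (nf := fun tau => l2norm ip (f tau)).
  assert (rcGh : rc T Gh) by (apply rc_ip; auto).
  assert (rcG : rc T G) by (apply rc_ip; auto).
  assert (rcN : rc T nf) by (apply rc_norm; auto).
  assert (K1 : forall z, continuous (fun tau => sin (omh * (t - tau))) z).
  { intros z. apply (ex_derive_continuous (K := R_AbsRing) (V := R_NormedModule)). auto_derive. auto. }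
  assert (K0 : forall z, continuous (fun tau => sin (om * (t - tau))) z).
  { intros z. apply (ex_derive_continuous (K := R_AbsRing) (V := R_NormedModule)). auto_derive. auto. }
  assert (K3 : forall z, continuous (fun tau => sin (omh * (t - tau)) - sin (om * (t - tau))) z).
  { intros z. apply (ex_derive_continuous (K := R_AbsRing) (V := R_NormedModule)). auto_derive. auto. }
  assert (X1 : ex_RInt (fun tau => sin (omh * (t - tau)) * (Gh tau - G tau)) 0 t).
  { apply (int_kg T _ (fun tau => Gh tau - G tau)); auto. apply rc_minus; auto. }
  assert (X2 : ex_RInt (fun tau => sin (omh * (t - tau)) * G tau) 0 t) by (apply (int_kg T); auto).
  assert (X0 : ex_RInt (fun tau => sin (om * (t - tau)) * G tau) 0 t) by (apply (int_kg T); auto).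
  assert (X3 : ex_RInt (fun tau => (sin (omh * (t - tau)) - sin (om * (t - tau))) * G tau) 0 t)
    by (apply (int_kg T); auto).
  assert (XN : ex_RInt nf 0 t) by (apply (int_g T); auto).
  set (I1 := RInt (fun tau => sin (omh * (t - tau)) * (Gh tau - G tau)) 0 t).
  set (I2 := RInt (fun tau => sin (omh * (t - tau)) * G tau) 0 t).
  set (I0 := RInt (fun tau => sin (om * (t - tau)) * G tau) 0 t).
  set (I3 := RInt (fun tau => (sin (omh * (t - tau)) - sin (om * (t - tau))) * G tau) 0 t).
  set (Nf := RInt nf 0 t).
  set (M := max_on_0t (fun tau => Rabs (sin (omh * tau) - sin (om * tau))) t).
  assert (EI12 : RInt (fun tau => sin (omh * (t - tau)) * Gh tau) 0 t = I1 + I2).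
  { etransitivity; [|exact (RInt_plus (V := R_CompleteNormedModule) _ _ 0 t X1 X2)].
    apply RInt_ext. intros x _. match goal with |- ?l = plus ?a ?b => change (l = a + b) | |- ?l = minus ?a ?b => change (l = a - b) end. ring. }
  assert (E3 : I2 - I0 = I3).
  { symmetry. etransitivity; [|exact (RInt_minus (V := R_CompleteNormedModule) _ _ 0 t X2 X0)].
    apply RInt_ext. intros x _. match goal with |- ?l = plus ?a ?b => change (l = a + b) | |- ?l = minus ?a ?b => change (l = a - b) end. ring. }
  assert (Edh : dh = ip u0 (uh j) * cos (omh * t) + ip v0 (uh j) / omh * sin (omh * t) + / omh * (I1 + I2)).
  { unfold dh, dcoef. cbv zeta. rewrite <- EI12. reflexivity. }
  assert (Ed : d = ip u0 (u j) * cos (om * t) + ip v0 (u j) / om * sin (om * t) + / om * I0).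
  { unfold d, dcoef. cbv zeta. reflexivity. }
  rewrite Edh, Ed.
  assert (HpNf : forall c, ex_RInt (fun tau => c * nf tau) 0 t /\ RInt (fun tau => c * nf tau) 0 t = c * Nf).
  { intros c. split.
    - exact (ex_RInt_scal (V := R_NormedModule) nf 0 t c XN).
    - exact (RInt_scal (V := R_CompleteNormedModule) nf 0 t c XN). }
  assert (Bf : forall tau w, Rabs (ip (f tau) w) <= nf tau * l2norm ip w).
  { intros tau w. apply (cauchy_schwarz Hip). }
  assert (Ht0 : 0 <= t) by lra.
  apply (final_ineq om omh dl _ _ _ _ _ _ _ _ _ _ I3 _ _ _ _ _); auto.
  - apply Rle_trans with (Rabs (sin (omh * 0) - sin (om * 0))). apply Rabs_pos.
    unfold M. apply (max_ge (fun tau => Rabs (sin (omh * tau) - sin (om * tau))) t 2). intros y _.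
      eapply Rle_trans. apply Rabs_triang. rewrite Rabs_Ropp.
      pose proof (abs_sin_le1 (omh * y)). pose proof (abs_sin_le1 (om * y)). lra. lra.
  - rewrite <- (ip_minus_r Hip). apply (cauchy_schwarz Hip).
  - rewrite <- (Rmult_1_r (l2norm ip u0)), <- Nu. apply (cauchy_schwarz Hip).
  - rewrite <- (ip_minus_r Hip). apply (cauchy_schwarz Hip).
  - rewrite <- (Rmult_1_r (l2norm ip v0)), <- Nu. apply (cauchy_schwarz Hip).
  - destruct (HpNf dl) as [Xa Ea]. rewrite <- Ea. apply abs_RInt_bound; auto.
    intros tau _. rewrite Rabs_mult. unfold Gh, G. rewrite <- (ip_minus_r Hip).
    pose proof (abs_sin_le1 (omh * (t - tau))). pose proof (Bf tau (minus (uh j) (u j))) as Bt.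
    change (l2norm ip (minus (uh j) (u j))) with dl in Bt.
    pose proof (Rabs_pos (ip (f tau) (minus (uh j) (u j)))). nra.
  - apply abs_RInt_bound; auto. intros tau _. rewrite Rabs_mult.
    pose proof (abs_sin_le1 (omh * (t - tau))). pose proof (Bf tau (u j)) as Bt. rewrite Nu in Bt.
    pose proof (Rabs_pos (G tau)). unfold G in *. nra.
  - destruct (HpNf M) as [Xa Ea]. rewrite <- Ea. apply abs_RInt_bound; auto.
    intros tau Htau. rewrite Rabs_mult.
    assert (Rabs (sin (omh * (t - tau)) - sin (om * (t - tau))) <= M).
    { unfold M. apply (max_ge (fun tau => Rabs (sin (omh * tau) - sin (om * tau))) t 2). intros y _.
      eapply Rle_trans. apply Rabs_triang. rewrite Rabs_Ropp.
      pose proof (abs_sin_le1 (omh * y)). pose proof (abs_sin_le1 (om * y)). lra. lra. }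
    pose proof (Bf tau (u j)) as Bt. rewrite Nu in Bt.
    pose proof (Rabs_pos (G tau)). pose proof (Rabs_pos (sin (omh * (t - tau)) - sin (om * (t - tau)))).
    unfold G in *. nra.
  - apply abs_RInt_bound; auto. intros tau _. rewrite Rabs_mult.
    pose proof (abs_sin_le1 (om * (t - tau))). pose proof (Bf tau (u j)) as Bt. rewrite Nu in Bt.
    pose proof (Rabs_pos (G tau)). unfold G in *. nra.
  - apply abs_cos_le1.
  - apply abs_sin_le1.
  - apply abs_cos_le1.
  - apply abs_sin_le1.
Qed.
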